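(* For any $\mathcal{L}^S$-theory $\Gamma$, $\Gamma+\Sigma+\Sigma_1$ is consistent if and only if $\Gamma+\Sigma^*+\Sigma_1^*$ is consistent.
   Context: $\mathcal{L}$ is a countable first-order language containing a binary symbol $<$; $\mathcal{L}^S$ is $\mathcal{L}$ with Skolem function symbols and $T_{\mathrm{skolem}}$ the theory saying they are Skolem functions; ''term'' means $\mathcal{L}^S$-term. $\lambda$ is a singular cardinal, $\eta=\mathrm{cf}(\lambda)$, $\langle\mu_i;i<\eta\rangle$ increasing cardinals with limit $\lambda$, $C=\{c_{ij}\mid i<\eta,j<\mu_i\}$ and $C^*=\{c_{ij}\mid i,j<\omega\}$ sets of new constants. For a set $D$ of such doubly indexed constants (constants below range over $D$, and in every expression $\tau(c_{m_1n_1},\dots,c_{m_kn_k})$ the constants are strictly increasing lexicographically in the index pairs), define: items (i) $T_{\mathrm{skolem}}$ plus axioms that $<$ is a linear order; (ii) $c_{ij}<c_{kl}$ iff $(i,j)<(k,l)$ lexicographically; (iii) $\tau(c_{i_1j_1},\dots,c_{i_nj_n})<c_{ij}$ whenever $i_1,\dots,i_n<i$. The theory $\Sigma_1$ over $D$ is (i)–(iii) plus: (iv) for $i_n>1$, any $j$, any $u\ge i_n$, any $l_1,\dots,l_{n-q}$: if $\tau(c_{i_1j_1},\dots,c_{i_nj_n})<c_{(i_n-1)j}$ then $\tau(\bar c,c_{i_{q+1}j_{q+1}},\dots,c_{i_nj_n})=\tau(\bar c,c_{ul_1},\dots,c_{ul_{n-q}})$, with $q$ greatest such that $i_q\ne i_n$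 ($q=0$ if none) and $\bar c=\langle c_{i_1j_1},\dots,c_{i_qj_q}\rangle$. The theory $\Sigma$ over $D$ is (i)–(iii) plus: (iv) for any $u<i_n$, any $v$ and any $l_{m+1},\dots,l_n$: if $\tau(c_{i_1j_1},\dots,c_{i_nj_n})<c_{uv}$ then $\tau(\bar c,c_{i_{m+1}j_{m+1}},\dots,c_{i_nj_n})=\tau(\bar c,c_{i_{m+1}l_{m+1}},\dots,c_{i_nl_n})$, with $m$ the smallest integer such that $i_{m+1}>u$ and $\bar c=\langle c_{i_1j_1},\dots,c_{i_mj_m}\rangle$. $\Sigma,\Sigma_1$ denote these theories over $C$; $\Sigma^*,\Sigma_1^*$ denote them over $C^*$. *)

(* Defs.v *)
From mathcomp Require Import all_boot.
From Stdlib Require List.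
Unset Printing Implicit Defensive.

(* The countable language L.  Besides the function symbols [fsym] and the    *)
(* relation symbols [rsym] (with arities), L contains the distinguished      *)
(* binary relation symbol <, which is built into the syntax ([Lt]).           *)
(* Constant symbols of L are 0-ary function symbols.                          *)
Record lang := Lang {
  fsym : countType; farity : fsym -> nat;
  rsym : countType; rarity : rsym -> nat }.
Arguments farity {l} _. Arguments rarity {l} _.

(* Syntax of L^S, extended by a type [K] of new constants.  Variables are de  *)
(* Bruijn indices.  [Sk phi n args] is the Skolem function symbol f_{phi,n}  *)
(* (arity n) for the L^S-formula phi(x, y1..yn), where in phi the variable 0 *)
(* is x and the variable k (1 <= k <= n) is y_k.  L^S-formulas are the       *)
(* formulas with K = void (no new constants).                                *)
Section Syntax.
Variable L : lang.
Inductive term (K : Type) : Type :=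
| Var : nat -> term K
| Con : K -> term K
| App : forall f : fsym L, ('I_(farity f) -> term K) -> term K
| Sk : form void -> forall n : nat, ('I_n -> term K) -> term K
with form (K : Type) : Type :=
| Bot : form K
| Eq : term K -> term K -> form K
| Lt : term K -> term K -> form K
| Rel : forall r : rsym L, ('I_(rarity r) -> term K) -> form K
| Imp : form K -> form K -> form K
| All : form K -> form K.
End Syntax.
Arguments Var {L K}. Arguments Con {L K}. Arguments App {L K}. Arguments Sk {L K}.
Arguments Bot {L K}. Arguments Eq {L K}. Arguments Lt {L K}. Arguments Rel {L K}.
Arguments Imp {L K}. Arguments All {L K}.

Fixpoint tvars_lt {L : lang} {K : Type} (k : nat) (t : term L K) : Prop :=
  match t with
  | Var n => (n < k)%N
  | Con _ => True
  | App f a => forall i, tvars_lt k (a i)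
  | Sk _ _ a => forall i, tvars_lt k (a i)
  end.
Fixpoint fvars_lt {L : lang} {K : Type} (k : nat) (phi : form L K) : Prop :=
  match phi with
  | Bot => True
  | Eq t s => tvars_lt k t /\ tvars_lt k s
  | Lt t s => tvars_lt k t /\ tvars_lt k s
  | Rel r a => forall i, tvars_lt k (a i)
  | Imp p q => fvars_lt k p /\ fvars_lt k q
  | All p => fvars_lt k.+1 p
  end.

(* Well-formedness: every Skolem symbol f_{phi,n} occurring is a genuine      *)
(* symbol of L^S, i.e. phi is itself a well-formed L^S-formula whose free     *)
(* variables are among x = 0, y1 = 1, ..., yn = n.                            *)
Fixpoint wf_t {L : lang} {K : Type} (t : term L K) {struct t} : Prop :=
  match t with
  | Var _ => True
  | Con _ => True
  | App f a => forall i, wf_t (a i)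
  | Sk phi n a => wf_f phi /\ fvars_lt n.+1 phi /\ forall i, wf_t (a i)
  end
with wf_f {L : lang} {K : Type} (phi : form L K) {struct phi} : Prop :=
  match phi with
  | Bot => True
  | Eq t s => wf_t t /\ wf_t s
  | Lt t s => wf_t t /\ wf_t s
  | Rel r a => forall i, wf_t (a i)
  | Imp p q => wf_f p /\ wf_f q
  | All p => wf_f p
  end.

Definition LS_sentence {L : lang} (phi : form L void) : Prop :=
  wf_f phi /\ fvars_lt 0 phi.

Record structure (L : lang) := MkStructure {
  dom :> Type;
  dom_inh : dom;
  funI : forall f : fsym L, ('I_(farity f) -> dom) -> dom;
  relI : forall r : rsym L, ('I_(rarity r) -> dom) -> Prop;
  ltM : dom -> dom -> Prop;
  skI : form L void -> forall n : nat, ('I_n -> dom) -> dom }.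
Arguments dom_inh {L} s. Arguments funI {L} s f _. Arguments relI {L} s r _.
Arguments ltM {L} s _ _. Arguments skI {L} s _ n _.

Definition scons {T : Type} (x : T) (rho : nat -> T) (n : nat) : T :=
  if n is n'.+1 then rho n' else x.

Fixpoint teval {L : lang} (M : structure L) {K : Type} (cI : K -> M)
    (rho : nat -> M) (t : term L K) : M :=
  match t with
  | Var n => rho n
  | Con c => cI c
  | App f a => funI M f (fun i => teval M cI rho (a i))
  | Sk phi n a => skI M phi n (fun i => teval M cI rho (a i))
  end.

Fixpoint sat {L : lang} (M : structure L) {K : Type} (cI : K -> M)
    (rho : nat -> M) (phi : form L K) : Prop :=
  match phi with
  | Bot => False
  | Eq t s => teval M cI rho t = teval M cI rho s
  | Lt t s => ltM M (teval M cI rho t) (teval M cI rho s)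
  | Rel r a => relI M r (fun i => teval M cI rho (a i))
  | Imp p q => sat M cI rho p -> sat M cI rho q
  | All p => forall x : M, sat M cI (scons x rho) p
  end.

Definition models {L : lang} (M : structure L) (phi : form L void) : Prop :=
  forall rho : nat -> M, sat M (@of_void M) rho phi.

(* M |= T_skolem: for every L^S-formula phi(x,y1..yn),
   M |= forall y1..yn, (exists x, phi(x,ybar)) -> phi(f_{phi,n}(ybar), ybar).
   (Written out semantically; y_k is the value rho (k-1).) *)
Definition skolem_ok {L : lang} (M : structure L) : Prop :=
  forall (phi : form L void) (n : nat), wf_f phi -> fvars_lt n.+1 phi ->
  forall rho : nat -> M,
    (exists a : M, sat M (@of_void M) (scons a rho) phi) ->
    sat M (@of_void M) (scons (skI M phi n (fun i : 'I_n => rho i)) rho) phi.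

Definition linear_lt {L : lang} (M : structure L) : Prop :=
  (forall x : M, ~ ltM M x x) /\
  (forall x y z : M, ltM M x y -> ltM M y z -> ltM M x z) /\
  (forall x y : M, x = y \/ ltM M x y \/ ltM M y x).

(* Doubly indexed constants c_{ij}: first index in ix1, second in ix2, and   *)
(* c_{ij} exists iff okix i j.                                               *)
Record index_data := IndexData {
  ix1 : Type; lt1 : ix1 -> ix1 -> Prop;
  ix2 : Type; lt2 : ix2 -> ix2 -> Prop;
  okix : ix1 -> ix2 -> Prop }.

Arguments lt1 {i} _ _. Arguments lt2 {i} _ _. Arguments okix {i} _ _.
Definition cst (X : index_data) : Type := {p : ix1 X * ix2 X | okix p.1 p.2}.

Section Sigma.
Variables (L : lang) (X : index_data).

Definition fst_ix (c : cst X) : ix1 X := (sval c).1.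
Definition snd_ix (c : cst X) : ix2 X := (sval c).2.
Definition le1 (a b : ix1 X) : Prop := a = b \/ lt1 a b.

Definition lexlt (c d : cst X) : Prop :=
  lt1 (fst_ix c) (fst_ix d) \/
  (fst_ix c = fst_ix d /\ lt2 (snd_ix c) (snd_ix d)).

Fixpoint lex_incr (cs : seq (cst X)) : Prop :=
  match cs with
  | c :: t => match t with d :: _ => lexlt c d /\ lex_incr t | [::] => True end
  | [::] => True
  end.

Definition admissible (tau : term L void) (cs : seq (cst X)) : Prop :=
  wf_t tau /\ tvars_lt (size cs) tau /\ lex_incr cs.

Definition tval (M : structure L) (cI : cst X -> M)
    (tau : term L void) (cs : seq (cst X)) : M :=
  teval M (@of_void M) (fun r => nth (dom_inh M) (map cI cs) r) tau.

Variables (M : structure L) (cI : cst X -> M).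

Definition sigma_ii : Prop :=
  forall c d : cst X, ltM M (cI c) (cI d) <-> lexlt c d.

Definition sigma_iii : Prop :=
  forall (tau : term L void) (cs : seq (cst X)) (c : cst X),
    admissible tau cs ->
    (forall d, List.In d cs -> lt1 (fst_ix d) (fst_ix c)) ->
    ltM M (tval M cI tau cs) (cI c).

(* item (iv) of Sigma.  cs = pre ++ p :: post, where m = size pre is the
   smallest integer with i_{m+1} > u (p is the (m+1)-th constant);
   d = c_{uv}; post' = c_{i_{m+1} l_{m+1}}, ..., c_{i_n l_n}. *)
Definition sigma_iv : Prop :=
  forall (tau : term L void) (pre post post' : seq (cst X)) (p d : cst X),
    admissible tau (pre ++ p :: post) ->
    (forall c, List.In c pre -> le1 (fst_ix c) (fst_ix d)) ->
    lt1 (fst_ix d) (fst_ix p) ->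
    map fst_ix post' = map fst_ix (p :: post) ->
    lex_incr (pre ++ post') ->
    ltM M (tval M cI tau (pre ++ p :: post)) (cI d) ->
    tval M cI tau (pre ++ p :: post) = tval M cI tau (pre ++ post').

Definition pred_ix (a b : ix1 X) : Prop :=
  lt1 a b /\ forall k, ~ (lt1 a k /\ lt1 k b).

(* item (iv) of Sigma_1.  cs = pre ++ p :: post, where q = size pre is the
   greatest integer with i_q <> i_n (all of p :: post have first index i_n);
   d = c_{(i_n - 1) j}; post' = c_{u l_1}, ..., c_{u l_{n-q}}.
   "i_n > 1" together with "i_n - 1 exists": fst_ix d is the immediate
   predecessor of i_n and fst_ix d is not the least index. *)
Definition sigma1_iv : Prop :=
  forall (tau : term L void) (pre post post' : seq (cst X)) (p d : cst X)
         (u : ix1 X),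
    admissible tau (pre ++ p :: post) ->
    (forall c, List.In c post -> fst_ix c = fst_ix p) ->
    (forall c, List.In c pre -> fst_ix c <> fst_ix p) ->
    pred_ix (fst_ix d) (fst_ix p) ->
    (exists a, lt1 a (fst_ix d)) ->
    le1 (fst_ix p) u ->
    size post' = size (p :: post) ->
    (forall c, List.In c post' -> fst_ix c = u) ->
    lex_incr (pre ++ post') ->
    ltM M (tval M cI tau (pre ++ p :: post)) (cI d) ->
    tval M cI tau (pre ++ p :: post) = tval M cI tau (pre ++ post').

End Sigma.
Arguments fst_ix {X} c. Arguments snd_ix {X} c. Arguments le1 {X} a b.
Arguments lexlt {X} c d. Arguments lex_incr {X} cs.
Arguments admissible {L X} tau cs. Arguments tval {L X} M cI tau cs.
Arguments sigma_ii {L X} M cI. Arguments sigma_iii {L X} M cI.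
Arguments sigma_iv {L X} M cI. Arguments pred_ix {X} a b.
Arguments sigma1_iv {L X} M cI.

Definition consistent_with_Sigmas {L : lang} (X : index_data)
    (Gamma : form L void -> Prop) : Prop :=
  exists (M : structure L) (cI : cst X -> M),
    (forall phi, Gamma phi -> models M phi) /\
    skolem_ok M /\ linear_lt M /\
    sigma_ii M cI /\ sigma_iii M cI /\
    sigma_iv M cI /\ sigma1_iv M cI.

(* Ordinals and cardinals.  An ordinal is represented by a type with a       *)
(* strict well-order; a cardinal is an initial ordinal.                      *)
Definition strict_wellorder {T : Type} (lt : T -> T -> Prop) : Prop :=
  (forall x, ~ lt x x) /\
  (forall x y z, lt x y -> lt y z -> lt x z) /\
  (forall x y, x = y \/ lt x y \/ lt y x) /\
  well_founded lt.

Definition initial_below {T : Type} (lt : T -> T -> Prop) (x : T) : Prop :=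
  forall y, lt y x ->
    ~ exists f : {z | lt z x} -> {z | lt z y}, bijective f.

Definition initial_whole {T : Type} (lt : T -> T -> Prop) : Prop :=
  forall y, ~ exists f : T -> {z | lt z y}, bijective f.

Definition strictly_incr {A B : Type} (ltA : A -> A -> Prop)
    (ltB : B -> B -> Prop) (g : A -> B) : Prop :=
  forall a a', ltA a a' -> ltB (g a) (g a').

(* The standing data: lambda (the ordinal type Lam) is a singular cardinal,
   eta (the ordinal type I) is cf(lambda), and mu : I -> Lam is an increasing
   sequence of cardinals mu_i < lambda with limit lambda. *)
Definition singular_setup {Lam : Type} (ltL : Lam -> Lam -> Prop)
    {I : Type} (ltI : I -> I -> Prop) (mu : I -> Lam) : Prop :=
  [/\ strict_wellorder ltL,
      initial_whole ltL,
      (exists f : nat -> Lam, injective f),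
      strict_wellorder ltI &
  [/\ strictly_incr ltI ltL mu,
      (forall i, initial_below ltL (mu i)),
      (forall x : Lam, exists i, ltL x (mu i)),
      (* eta = cf(lambda): eta is <= the order type of every cofinal subset *)
      (forall S : Lam -> Prop,
         (forall x, exists y, S y /\ (x = y \/ ltL x y)) ->
         exists g : I -> Lam, (forall i, S (g i)) /\ strictly_incr ltI ltL g) &
      (* singular: cf(lambda) < lambda *)
      (exists x : Lam, exists g : I -> Lam,
         (forall i, ltL (g i) x) /\ strictly_incr ltI ltL g)]].

Definition C_data {Lam : Type} (ltL : Lam -> Lam -> Prop)
    {I : Type} (ltI : I -> I -> Prop) (mu : I -> Lam) : index_data :=
  @IndexData I ltI Lam ltL (fun i j => ltL j (mu i)).

Definition Cstar_data : index_data :=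
  @IndexData nat (fun a b => (a < b)%N) nat (fun a b => (a < b)%N)
    (fun _ _ => True).

(* Main.v *)
Require Import Defs.
From mathcomp Require Import all_boot.
From mathcomp Require boolp classical_sets filter.
Unset Printing Implicit Defensive.

Record isUltra {T : Type} (U : (T -> Prop) -> Prop) : Prop := {
  uT : U (fun _ => True);
  uI : forall A B, U A -> U B -> U (fun x => A x /\ B x);
  uS : forall A B : T -> Prop, (forall x, A x -> B x) -> U A -> U B;
  u0 : ~ U (fun _ => False);
  uU : forall A, U A \/ U (fun x => ~ A x) }.
Arguments uT {T U}. Arguments uI {T U}. Arguments uS {T U} _ {A B}. Arguments u0 {T U}. Arguments uU {T U}.

Lemma ultra_exists (T : Type) (F : (T -> Prop) -> Prop) :
  F (fun _ => True) ->
  (forall A B, F A -> F B -> F (fun x => A x /\ B x)) ->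
  (forall A B : T -> Prop, (forall x, A x -> B x) -> F A -> F B) ->
  ~ F (fun _ => False) ->
  exists U, isUltra U /\ forall A, F A -> U A.
Proof.
move=> FT FI FS F0.
have PF : filter.ProperFilter F.
  split; first exact: F0.
  split; [exact: FT| by move=> A B; apply: FI | by move=> A B AB; apply: FS].
have [G [UG FG]] := filter.ultraFilterLemma PF.
exists G; split; last exact: FG.
split.
- exact: (@filter.filterT _ _ (@filter.filter_filter _ _ (@filter.ultra_proper _ _ UG))).
- move=> A B; exact: (@filter.filterI _ _ (@filter.filter_filter _ _ (@filter.ultra_proper _ _ UG))).
- move=> A B; exact: (@filter.filterS _ _ (@filter.filter_filter _ _ (@filter.ultra_proper _ _ UG))).
- exact: (@filter.filter_not_empty _ _ (@filter.ultra_proper _ _ UG)).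
- move=> A; exact: (filter.in_ultra_setVsetC A UG).
Qed.

Section UltraFacts.
Context {T : Type} {U : (T -> Prop) -> Prop} (HU : isUltra U).

Lemma US {A B} : U A -> (forall x, A x -> B x) -> U B.
Proof. by move=> UA AB; apply: (uS HU) AB UA. Qed.
Lemma UI2 {A B C} : U A -> U B -> (forall x, A x -> B x -> C x) -> U C.
Proof. by move=> UA UB H; apply: (US (uI HU _ _ UA UB)) => x [] ; exact: H. Qed.

Lemma U_ex A : U A -> exists s, A s.
Proof.
move=> UA; apply: boolp.contrapT => nex; apply: (u0 HU).
apply: (@US A (fun _ => False) UA) => s As; apply: nex; by exists s.
Qed.

Lemma U_or {A B} : U (fun s => A s \/ B s) -> U A \/ U B.
Proof.
move=> UAB; case: (uU HU A) => [|UnA]; first by left.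
right; refine (UI2 UAB UnA _) => s [] //.
Qed.

Lemma U_fin_list (I : Type) (A : I -> T -> Prop) (l : seq I) :
  (forall i, U (A i)) -> U (fun s => forall i, List.In i l -> A i s).
Proof.
move=> HA; elim: l => [|i l IH].
  by refine (US (uT HU) _) => s _ i [].
refine (UI2 (HA i) IH _) => s Ai Al j [<-|jl] //; exact: Al.
Qed.

Lemma U_fin n (A : 'I_n -> T -> Prop) :
  (forall i, U (A i)) -> U (fun s => forall i, A i s).
Proof.
move=> HA; refine (US (@U_fin_list 'I_n A (enum 'I_n) HA) _) => s H i.
apply: H; have : i \in enum 'I_n by rewrite mem_enum.
elim: (enum 'I_n) => //= j l IH; rewrite in_cons => /orP[/eqP->|/IH]; [left|right] => //.
Qed.
End UltraFacts.

Section Ultraproduct.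
Variables (L : lang) (M : structure L) (T : Type) (U : (T -> Prop) -> Prop)
  (HU : isUltra U).

Definition agree (f g : T -> M) : Prop := U (fun s => f s = g s).

Lemma agree_refl f : agree f f.
Proof. by refine (US HU (uT HU) _). Qed.
Lemma agree_sym {f g} : agree f g -> agree g f.
Proof. by move=> H; refine (US HU H _) => s ->. Qed.
Lemma agree_trans {f g h} : agree f g -> agree g h -> agree f h.
Proof. by move=> H1 H2; refine (UI2 HU H1 H2 _) => s -> ->. Qed.

Definition udom : Type := {P : (T -> M) -> Prop | exists f, P = agree f}.
Definition cls (f : T -> M) : udom := exist _ (agree f) (ex_intro _ f erefl).
Definition rep (x : udom) : T -> M := sval (boolp.cid (proj2_sig x)).

Lemma repK x : cls (rep x) = x.
Proof.
case: x => P h; rewrite /cls /rep /=.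
case: (boolp.cid h) => f e /=; subst P.
by apply: boolp.eq_exist.
Qed.

Lemma cls_eq f g : cls f = cls g <-> agree f g.
Proof.
split=> [e|H].
  have: agree f = agree g by move: e => /(congr1 sval).
  by move=> ->; apply: agree_refl.
apply: boolp.eq_exist; apply: boolp.funext => k; apply: boolp.propext; split.
  by move=> Hk; exact: (agree_trans (agree_sym H) Hk).
by move=> Hk; exact: (agree_trans H Hk).
Qed.

Lemma rep_cls f : U (fun s => rep (cls f) s = f s).
Proof. by have /cls_eq : cls (rep (cls f)) = cls f by rewrite repK. Qed.

Definition ustruct : structure L :=
  @MkStructure L udom (cls (fun _ => dom_inh M))
    (fun f a => cls (fun s => funI M f (fun i => rep (a i) s)))
    (fun r a => U (fun s => relI M r (fun i => rep (a i) s)))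
    (fun x y => U (fun s => ltM M (rep x s) (rep y s)))
    (fun phi n a => cls (fun s => skI M phi n (fun i => rep (a i) s))).

Lemma fam_rep n (g : 'I_n -> T -> M) :
  U (fun s => (fun i => rep (cls (g i)) s) = (fun i => g i s)).
Proof.
refine (US HU (@U_fin _ _ HU n _ (fun i => rep_cls (g i))) _) => s H.
by apply: boolp.funext => i; apply: H.
Qed.

Lemma cls_app n (F : T -> ('I_n -> M) -> M) (g : 'I_n -> T -> M) :
  cls (fun s => F s (fun i => rep (cls (g i)) s)) = cls (fun s => F s (fun i => g i s)).
Proof. by apply/cls_eq; refine (US HU (fam_rep _ g) _) => s ->. Qed.

Lemma U_app n (F : T -> ('I_n -> M) -> Prop) (g : 'I_n -> T -> M) :
  U (fun s => F s (fun i => rep (cls (g i)) s)) <-> U (fun s => F s (fun i => g i s)).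
Proof.
split=> H; refine (UI2 HU H (fam_rep _ g) _) => s; first by move=> ? <-.
by move=> ? ->.
Qed.

Lemma ltU_cls f g :
  ltM ustruct (cls f) (cls g) <-> U (fun s => ltM M (f s) (g s)).
Proof.
rewrite /=; split=> H.
  refine (UI2 HU (UI2 HU H (rep_cls f) (fun s a b => conj a b)) (rep_cls g) _).
  by move=> s [a <-] <-.
refine (UI2 HU (UI2 HU H (rep_cls f) (fun s a b => conj a b)) (rep_cls g) _).
by move=> s [a ->] ->.
Qed.

Lemma los_t : forall (K : Type) (t : term L K) (cIu : K -> udom)
  (cIs : T -> K -> M) (rho : nat -> udom) (rhos : T -> nat -> M),
  (forall k, cIu k = cls (fun s => cIs s k)) ->
  (forall n, rho n = cls (fun s => rhos s n)) ->
  teval ustruct cIu rho t = cls (fun s => teval M (cIs s) (rhos s) t).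
Proof.
refine (term_ind L (fun K t => forall cIu cIs rho rhos, _ -> _ -> _ = _) _ _ _ _).
- by move=> K n cIu cIs rho rhos hc hr /=.
- by move=> K k cIu cIs rho rhos hc hr /=.
- move=> K f a IH cIu cIs rho rhos hc hr /=.
  have -> : (fun s => funI M f (fun i => rep (teval ustruct cIu rho (a i)) s)) =
     (fun s => funI M f (fun i => rep (cls (fun s => teval M (cIs s) (rhos s) (a i))) s)).
    apply: boolp.funext => s; congr (funI M f _); apply: boolp.funext => i.
    by rewrite (IH i cIu cIs rho rhos hc hr).
  exact (cls_app _ (fun s b => funI M f b) (fun i s => teval M (cIs s) (rhos s) (a i))).
- move=> K phi n a IH cIu cIs rho rhos hc hr /=.
  have -> : (fun s => skI M phi n (fun i => rep (teval ustruct cIu rho (a i)) s)) =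
     (fun s => skI M phi n (fun i => rep (cls (fun s => teval M (cIs s) (rhos s) (a i))) s)).
    apply: boolp.funext => s; congr (skI M phi n _); apply: boolp.funext => i.
    by rewrite (IH i cIu cIs rho rhos hc hr).
  exact (cls_app _ (fun s b => skI M phi n b) (fun i s => teval M (cIs s) (rhos s) (a i))).
Qed.


Lemma los_f : forall (K : Type) (phi : form L K) (cIu : K -> udom)
  (cIs : T -> K -> M) (rho : nat -> udom) (rhos : T -> nat -> M),
  (forall k, cIu k = cls (fun s => cIs s k)) ->
  (forall n, rho n = cls (fun s => rhos s n)) ->
  (sat ustruct cIu rho phi <-> U (fun s => sat M (cIs s) (rhos s) phi)).
Proof.
refine (form_ind L (fun K phi => forall cIu cIs rho rhos, _ -> _ -> (_ <-> _)) _ _ _ _ _ _).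
- move=> K cIu cIs rho rhos hc hr /=; split => // H; exact: (u0 HU H).
- move=> K t1 t2 cIu cIs rho rhos hc hr /=.
  rewrite (los_t _ t1 _ _ _ _ hc hr) (los_t _ t2 _ _ _ _ hc hr); exact: cls_eq.
- move=> K t1 t2 cIu cIs rho rhos hc hr /=.
  have := ltU_cls (fun s => teval M (cIs s) (rhos s) t1) (fun s => teval M (cIs s) (rhos s) t2).
  by rewrite -(los_t _ t1 _ _ _ _ hc hr) -(los_t _ t2 _ _ _ _ hc hr).
- move=> K r a cIu cIs rho rhos hc hr /=.
  have -> : (fun s => relI M r (fun i => rep (teval ustruct cIu rho (a i)) s)) =
     (fun s => relI M r (fun i => rep (cls (fun s => teval M (cIs s) (rhos s) (a i))) s)).
    apply: boolp.funext => s; congr (relI M r _); apply: boolp.funext => i.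
    by rewrite (los_t _ (a i) _ _ _ _ hc hr).
  exact (U_app _ (fun s b => relI M r b) (fun i s => teval M (cIs s) (rhos s) (a i))).
- move=> K p IHp q IHq cIu cIs rho rhos hc hr /=.
  rewrite (IHp cIu cIs rho rhos hc hr) (IHq cIu cIs rho rhos hc hr); split.
    move=> H; case: (uU HU (fun s => sat M (cIs s) (rhos s) p)) => Hp.
      by refine (US HU (H Hp) _) => s.
    by refine (US HU Hp _) => s nps ps; case: (nps ps).
  by move=> H Hp; refine (UI2 HU H Hp _) => s; apply.
- move=> K p IHp cIu cIs rho rhos hc hr /=; split.
    move=> H; apply: boolp.contrapT => nU.
    case: (uU HU (fun s => forall y, sat M (cIs s) (scons y (rhos s)) p)) => // Hn.
    pose ys s := match boolp.pselect (exists y, ~ sat M (cIs s) (scons y (rhos s)) p) with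
                 | left e => sval (boolp.cid e) | right _ => dom_inh M end.
    have hr' : forall n, scons (cls ys) rho n = cls (fun s => scons (ys s) (rhos s) n).
      by case=> [|n] //=.
    have := (IHp cIu cIs _ _ hc hr').1 (H (cls ys)) => Hs.
    have [s [Hs1 Hs2]] := U_ex HU _ (uI HU _ _ Hs Hn).
    move: Hs1; rewrite /ys; case: boolp.pselect => [e|ne].
      by case: (boolp.cid e) => y /= ny.
    move=> _; apply: Hs2 => y; apply: boolp.contrapT => ny; apply: ne; by exists y.
  move=> H x.
  have hr' : forall n, scons x rho n = cls (fun s => scons (rep x s) (rhos s) n).
    by case=> [|n] //=; rewrite repK.
  apply/(IHp cIu cIs _ _ hc hr').
  by refine (US HU H _) => s; apply.
Qed.

Lemma los_void (phi : form L void) (rho : nat -> udom) :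
  sat ustruct (@of_void ustruct) rho phi <->
  U (fun s => sat M (@of_void M) (fun n => rep (rho n) s) phi).
Proof.
apply: los_f => [[]|n]; by rewrite repK.
Qed.

Lemma nth_cls {C : Type} (F : C -> T -> M) (cs : seq C) r :
  nth (cls (fun _ => dom_inh M)) (map (fun c => cls (F c)) cs) r =
  cls (fun s => nth (dom_inh M) (map (fun c => F c s) cs) r).
Proof. by elim: cs r => [|c cs IH] [|r] //=. Qed.

Lemma tval_u {C : index_data} (F : cst C -> T -> M) (tau : term L void) cs :
  Defs.tval ustruct (fun c => cls (F c)) tau cs =
  cls (fun s => Defs.tval M (fun c => F c s) tau cs).
Proof. rewrite /Defs.tval; apply: los_t => [[]|n]; exact: nth_cls. Qed.

Lemma ustruct_models phi : models M phi -> models ustruct phi.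
Proof.
move=> H rho; apply/los_void; by refine (US HU (uT HU) _) => s _; apply: H.
Qed.

Lemma ustruct_skolem : skolem_ok M -> skolem_ok ustruct.
Proof.
move=> Hsk phi n wf fv rho [a Ha].
pose rhos s k := rep (rho k) s.
have hr : forall k, rho k = cls (fun s => rhos s k) by move=> k; rewrite repK.
have hc : forall k : void, @of_void ustruct k = cls (fun s => @of_void M k) by case.
have hra : forall k, scons a rho k = cls (fun s => scons (rep a s) (rhos s) k).
  by case=> [|k] //=; rewrite repK.
have := (los_f _ phi _ _ _ _ hc hra).1 Ha => Ua.
have hrb : forall k, scons (skI ustruct phi n (fun i : 'I_n => rho i)) rho k =
   cls (fun s => scons (skI M phi n (fun i : 'I_n => rhos s i)) (rhos s) k).
  by case=> [|k] //=.
apply/(los_f _ phi _ _ _ _ hc hrb).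
refine (US HU Ua _) => s Hs; apply: Hsk => //; by exists (rep a s).
Qed.

Lemma ustruct_linear : linear_lt M -> linear_lt ustruct.
Proof.
move=> [Hirr [Htr Htot]]; split; [|split].
- move=> x /= H; apply: (u0 HU); by refine (US HU H _) => s /Hirr.
- move=> x y z /= H1 H2; refine (UI2 HU H1 H2 _) => s; exact: Htr.
- move=> x y.
  have H : U (fun s => rep x s = rep y s \/ (ltM M (rep x s) (rep y s) \/ ltM M (rep y s) (rep x s))).
    by refine (US HU (uT HU) _) => s _; apply: Htot.
  case: (U_or HU H) => [Heq|H'].
    by left; rewrite -(repK x) -(repK y); apply/cls_eq.
  by right; apply: (U_or HU H').
Qed.

End Ultraproduct.
Arguments cls {L M T} U f.
Arguments ustruct {L} M {T} U.
Arguments ltU_cls {L M T U} HU f g.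
Arguments cls_eq {L M T U} HU f g.
Arguments tval_u {L M T U} HU {C} F tau cs.
Arguments ustruct_models {L M T U} HU phi.
Arguments ustruct_skolem {L M T U} HU.
Arguments ustruct_linear {L M T U} HU.

Lemma In_map_ex {A B : Type} (h : A -> B) (l : seq A) y :
  List.In y (map h l) -> exists x, List.In x l /\ y = h x.
Proof.
elim: l => [|x l IH] //= [<-|H]; first by exists x; split => //; left.
by have [z [Hz ->]] := IH H; exists z; split => //; right.
Qed.

Lemma In_map_in {A B : Type} (h : A -> B) (l : seq A) x :
  List.In x l -> List.In (h x) (map h l).
Proof. elim: l => [|y l IH] //= [->|H]; [left|right; apply: IH] => //. Qed.

Lemma In_cat {A : Type} (x : A) l1 l2 : List.In x (l1 ++ l2) <-> List.In x l1 \/ List.In x l2.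
Proof.
elim: l1 => [|y l IH] /=; first by split => [H|[[]|H]] //; right.
by rewrite IH; tauto.
Qed.

Section Transfer.
Variables (L : lang) (X Y : index_data) (M : structure L) (cI : cst X -> M).
Hypotheses (Hii : sigma_ii M cI) (Hiii : sigma_iii M cI) (Hiv : sigma_iv M cI)
  (H1iv : sigma1_iv M cI).
Variables (h : cst Y -> cst X) (f1 : ix1 Y -> ix1 X) (D : cst Y -> Prop).
Hypotheses
  (Hlex : forall c d, D c -> D d -> (lexlt (h c) (h d) <-> lexlt c d))
  (Hf1 : forall c, D c -> fst_ix (h c) = f1 (fst_ix c))
  (Hlt : forall c d, D c -> D d -> lt1 (fst_ix c) (fst_ix d) ->
           lt1 (f1 (fst_ix c)) (f1 (fst_ix d)))
  (Hinj : forall c d, D c -> D d -> f1 (fst_ix c) = f1 (fst_ix d) ->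
           fst_ix c = fst_ix d)
  (Hpred : forall c d, D c -> D d -> pred_ix (fst_ix c) (fst_ix d) ->
           pred_ix (f1 (fst_ix c)) (f1 (fst_ix d)))
  (Hbot : forall c, D c -> (exists a, lt1 a (fst_ix c)) ->
           exists a, lt1 a (f1 (fst_ix c))).

Definition cJ (c : cst Y) : M := cI (h c).

Lemma lex_incr_map cs : (forall x, List.In x cs -> D x) -> lex_incr cs ->
  lex_incr (map h cs).
Proof.
elim: cs => [|c cs IH] //= HD.
case: cs IH HD => [|d cs] IH HD //= [Hcd Hr]; split.
  by apply/Hlex => //; apply: HD; [left|right; left].
by apply: IH => // x Hx; apply: HD; right.
Qed.

Lemma tval_map (tau : term L void) cs : Defs.tval M cJ tau cs = Defs.tval M cI tau (map h cs).
Proof. by rewrite /Defs.tval -map_comp. Qed.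

Lemma adm_map (tau : term L void) cs : (forall x, List.In x cs -> D x) -> admissible tau cs ->
  admissible tau (map h cs).
Proof.
move=> HD [H1 [H2 H3]]; split => //; split; first by rewrite size_map.
exact: lex_incr_map.
Qed.

Lemma map_fst_h l : (forall x, List.In x l -> D x) ->
  map fst_ix (map h l) = map f1 (map fst_ix l).
Proof.
elim: l => [|x l IH] //= HD; rewrite Hf1; last by apply: HD; left.
by rewrite IH // => y Hy; apply: HD; right.
Qed.

Lemma tr_ii c d : D c -> D d -> (ltM M (cJ c) (cJ d) <-> lexlt c d).
Proof. move=> Dc Dd; rewrite /cJ Hii; exact: Hlex. Qed.

Lemma tr_iii (tau : term L void) cs c : D c -> (forall x, List.In x cs -> D x) ->
  admissible tau cs -> (forall d, List.In d cs -> lt1 (fst_ix d) (fst_ix c)) ->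
  ltM M (Defs.tval M cJ tau cs) (cJ c).
Proof.
move=> Dc HD Ha Hl; rewrite tval_map; apply: Hiii; first exact: adm_map.
move=> d /(In_map_ex h) [d' [Hd' ->]]; rewrite !Hf1 //; last exact: HD.
by apply: Hlt => //; [apply: HD|apply: Hl].
Qed.

Lemma tr_iv (tau : term L void) pre post post' p d :
  (forall x, List.In x (d :: pre ++ p :: post ++ post') -> D x) ->
  admissible tau (pre ++ p :: post) ->
  (forall c, List.In c pre -> le1 (fst_ix c) (fst_ix d)) ->
  lt1 (fst_ix d) (fst_ix p) ->
  map fst_ix post' = map fst_ix (p :: post) ->
  lex_incr (pre ++ post') ->
  ltM M (Defs.tval M cJ tau (pre ++ p :: post)) (cJ d) ->
  Defs.tval M cJ tau (pre ++ p :: post) = Defs.tval M cJ tau (pre ++ post').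
Proof.
move=> HD Ha Hle Hdp Hmap Hinc Hlt'.
have Dd : D d by apply: HD; left.
have Dpre : forall x, List.In x pre -> D x.
  by move=> x Hx; apply: HD; right; apply/In_cat; left.
have Dp : D p by apply: HD; right; apply/In_cat; right; left.
have Dpost : forall x, List.In x post -> D x.
  by move=> x Hx; apply: HD; right; apply/In_cat; right; right; apply/In_cat; left.
have Dpost' : forall x, List.In x post' -> D x.
  by move=> x Hx; apply: HD; right; apply/In_cat; right; right; apply/In_cat; right.
have Dall : forall x, List.In x (pre ++ p :: post) -> D x.
  by move=> x /In_cat [|[<-|]]; auto.
have Dall' : forall x, List.In x (pre ++ post') -> D x.
  by move=> x /In_cat []; auto.
rewrite !tval_map !map_cat /=.
apply: (Hiv tau (map h pre) (map h post) (map h post') (h p) (h d)).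
- by rewrite -[_ :: _]/(map h (p :: post)) -map_cat; apply: adm_map.
- move=> c /(In_map_ex h) [c' [Hc' ->]].
  have Dc' := Dpre c' Hc'; rewrite (Hf1 c' Dc') (Hf1 d Dd).
  by case: (Hle c' Hc') => [->|H]; [left | right; apply: Hlt].
- by rewrite (Hf1 d Dd) (Hf1 p Dp); apply: Hlt.
- rewrite -[h p :: _]/(map h (p :: post)) !map_fst_h //; first by rewrite Hmap.
  by move=> x [<-|]; auto.
- by rewrite -map_cat; apply: lex_incr_map.
- by move: Hlt'; rewrite tval_map map_cat.
Qed.

Lemma tr1_iv (tau : term L void) pre post post' p d u :
  (forall x, List.In x (d :: pre ++ p :: post ++ post') -> D x) ->
  admissible tau (pre ++ p :: post) ->
  (forall c, List.In c post -> fst_ix c = fst_ix p) ->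
  (forall c, List.In c pre -> fst_ix c <> fst_ix p) ->
  pred_ix (fst_ix d) (fst_ix p) ->
  (exists a, lt1 a (fst_ix d)) ->
  le1 (fst_ix p) u ->
  size post' = size (p :: post) ->
  (forall c, List.In c post' -> fst_ix c = u) ->
  lex_incr (pre ++ post') ->
  ltM M (Defs.tval M cJ tau (pre ++ p :: post)) (cJ d) ->
  Defs.tval M cJ tau (pre ++ p :: post) = Defs.tval M cJ tau (pre ++ post').
Proof.
move=> HD Ha Hpost Hpre Hpr Hex Hle Hsz Hu Hinc Hlt'.
have Dd : D d by apply: HD; left.
have Dpre : forall x, List.In x pre -> D x.
  by move=> x Hx; apply: HD; right; apply/In_cat; left.
have Dp : D p by apply: HD; right; apply/In_cat; right; left.
have Dpost : forall x, List.In x post -> D x.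
  by move=> x Hx; apply: HD; right; apply/In_cat; right; right; apply/In_cat; left.
have Dpost' : forall x, List.In x post' -> D x.
  by move=> x Hx; apply: HD; right; apply/In_cat; right; right; apply/In_cat; right.
have Dall : forall x, List.In x (pre ++ p :: post) -> D x.
  by move=> x /In_cat [|[<-|]]; auto.
have Dall' : forall x, List.In x (pre ++ post') -> D x.
  by move=> x /In_cat []; auto.
have [c0 Hc0] : exists c0, List.In c0 post'.
  by move: Hsz; case E: post' => [|c0 l] //= _; exists c0; left.
have Dc0 : D c0 by apply: Dpost'.
have Eu : u = fst_ix c0 by rewrite (Hu c0 Hc0).
rewrite !tval_map !map_cat /=.
apply: (H1iv tau (map h pre) (map h post) (map h post') (h p) (h d) (f1 u)).
- by rewrite -[_ :: _]/(map h (p :: post)) -map_cat; apply: adm_map.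
- move=> c /(In_map_ex h) [c' [Hc' ->]]; rewrite !Hf1 //; last exact: Dpost.
  by rewrite Hpost.
- move=> c /(In_map_ex h) [c' [Hc' ->]]; rewrite !Hf1 //; last exact: Dpre.
  by move/Hinj => H; apply: (Hpre c' Hc'); apply: H => //; apply: Dpre.
- by rewrite !Hf1 //; apply: Hpred.
- by rewrite Hf1 //; apply: Hbot.
- rewrite (Hf1 p Dp); move: Hle; rewrite Eu => -[->|H]; first by left.
  by right; apply: Hlt.
- by rewrite /= !size_map.
- by move=> c /(In_map_ex h) [c' [Hc' ->]]; rewrite Hf1 ?Hu //; apply: Dpost'.
- by rewrite -map_cat; apply: lex_incr_map.
- by move: Hlt'; rewrite tval_map map_cat.
Qed.

End Transfer.
Arguments tr_ii {L X Y M cI} _ {h D} _.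
Arguments tr_iii {L X Y M cI} _ {h f1 D} _ _ _.
Arguments tr_iv {L X Y M cI} _ {h f1 D} _ _ _.
Arguments tr1_iv {L X Y M cI} _ {h f1 D} _ _ _ _ _ _.

Lemma wf_min {A : Type} (R : A -> A -> Prop) : well_founded R ->
  forall P : A -> Prop, (exists a, P a) -> exists a, P a /\ forall b, P b -> ~ R b a.
Proof.
move=> wf P [a Pa]; apply: boolp.contrapT => nex.
elim/(well_founded_ind wf): a Pa => a IH Pa; apply: nex; exists a; split => // b Pb Rba.
exact: IH b Rba Pb.
Qed.

Lemma incr_reflect {A : Type} (R : A -> A -> Prop) (f : nat -> A) :
  (forall x, ~ R x x) -> (forall x y z, R x y -> R y z -> R x z) ->
  (forall a b, (a < b)%N -> R (f a) (f b)) ->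
  (forall a b, R (f a) (f b) -> (a < b)%N) /\ (forall a b, f a = f b -> a = b).
Proof.
move=> Hirr Htr Hinc; split.
  move=> a b H; case: (ltngtP a b) => // [Hba|Eab].
    by case: (Hirr _ (Htr _ _ _ H (Hinc _ _ Hba))).
  by move: H; rewrite Eab => /Hirr.
move=> a b E; case: (ltngtP a b) => // [Hab|Hba].
  by have := Hinc _ _ Hab; rewrite E => /Hirr.
by have := Hinc _ _ Hba; rewrite E => /Hirr.
Qed.

Section Forward.
Variables (L : lang) (Lam : Type) (ltL : Lam -> Lam -> Prop)
  (I : Type) (ltI : I -> I -> Prop) (mu : I -> Lam).
Hypothesis Hs : singular_setup ltL ltI mu.

Let Lso : strict_wellorder ltL. Proof. by case: Hs. Qed.
Let Iso : strict_wellorder ltI. Proof. by case: Hs. Qed.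
Let Hmu : strictly_incr ltI ltL mu. Proof. by case: Hs => _ _ _ _ []. Qed.
Let Hcof : forall x : Lam, exists i, ltL x (mu i). Proof. by case: Hs => _ _ _ _ []. Qed.
Let Hsing : exists x : Lam, exists g : I -> Lam,
         (forall i, ltL (g i) x) /\ strictly_incr ltI ltL g.
Proof. by case: Hs => _ _ _ _ []. Qed.

Lemma I_nomax i : exists j, ltI i j.
Proof.
have [Iirr [Itr [Itot _]]] := Iso; have [Lirr [Ltr _]] := Lso.
have [j Hj] := Hcof (mu i); exists j.
case: (Itot i j) => [E|[//|Hji]]; first by move: Hj; rewrite E => /Lirr.
by case: (Lirr _ (Ltr _ _ _ Hj (Hmu _ _ Hji))).
Qed.

Lemma I_succ i : exists j, ltI i j /\ forall k, ~ (ltI i k /\ ltI k j).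
Proof.
have [_ [_ [_ Iwf]]] := Iso.
have [j [Hj Hmin]] := wf_min _ Iwf _ (I_nomax i).
by exists j; split => // k [Hik Hkj]; exact: (Hmin k Hik Hkj).
Qed.

Definition succI i : I := sval (boolp.cid (I_succ i)).
Lemma succI_spec i : ltI i (succI i) /\ forall k, ~ (ltI i k /\ ltI k (succI i)).
Proof. exact: (svalP (boolp.cid (I_succ i))). Qed.

Definition xg := sval (boolp.cid Hsing).
Definition gg : I -> Lam := sval (boolp.cid (svalP (boolp.cid Hsing))).
Lemma gg_spec : (forall i, ltL (gg i) xg) /\ strictly_incr ltI ltL gg.
Proof. exact: (svalP (boolp.cid (svalP (boolp.cid Hsing)))). Qed.

Definition i0 : I := sval (boolp.cid (Hcof xg)).
Lemma i0_spec : ltL xg (mu i0).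
Proof. exact: (svalP (boolp.cid (Hcof xg))). Qed.

Fixpoint h1 (n : nat) : I := if n is n'.+1 then succI (h1 n') else i0.

Lemma h1_lt {n m} : (n < m)%N -> ltI (h1 n) (h1 m).
Proof.
have [_ [Itr _]] := Iso.
elim: m => [|m IH] //; rewrite ltnS leq_eqVlt => /orP[/eqP->|H].
  exact: (succI_spec _).1.
exact: Itr _ _ _ (IH H) (succI_spec _).1.
Qed.

Lemma h1_mu n : ltL xg (mu (h1 n)).
Proof.
have [_ [Ltr _]] := Lso.
case: n => [|n]; first exact: i0_spec.
exact: Ltr _ _ _ i0_spec (Hmu _ _ (h1_lt (ltn0Sn n))).
Qed.

Lemma ok2 n m : ltL (gg (h1 m)) (mu (h1 n)).
Proof. have [_ [Ltr _]] := Lso; exact: Ltr _ _ _ (gg_spec.1 _) (h1_mu n). Qed.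

Definition hmap (c : cst Cstar_data) : cst (C_data ltL ltI mu) :=
  exist _ (h1 (fst_ix c), gg (h1 (snd_ix c))) (ok2 (fst_ix c) (snd_ix c)).

Lemma h1_refl : (forall a b, ltI (h1 a) (h1 b) -> (a < b)%N) /\
  (forall a b, h1 a = h1 b -> a = b).
Proof. have [Iirr [Itr _]] := Iso; exact: (incr_reflect _ _ Iirr Itr (@h1_lt)). Qed.

Lemma gh1_refl : (forall a b, ltL (gg (h1 a)) (gg (h1 b)) -> (a < b)%N) /\
  (forall a b, gg (h1 a) = gg (h1 b) -> a = b).
Proof.
have [Lirr [Ltr _]] := Lso; apply: (incr_reflect _ _ Lirr Ltr) => a b Hab.
exact: gg_spec.2 _ _ (h1_lt Hab).
Qed.

Lemma hmap_lex c d : lexlt (hmap c) (hmap d) <-> lexlt c d.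
Proof.
rewrite /lexlt /=; split.
  case=> [H|[E H]]; first by left; apply: h1_refl.1.
  by right; split; [apply: h1_refl.2|apply: gh1_refl.1].
case=> [H|[E H]]; first by left; apply: h1_lt.
by right; split; [exact: (congr1 h1 E)|apply: gg_spec.2; apply: h1_lt].
Qed.

Lemma nat_pred a b : pred_ix (X := Cstar_data) a b -> b = a.+1.
Proof.
move=> [/= Hab Hn]; apply/eqP; rewrite eqn_leq Hab andbT.
by case: (ltngtP b a.+1) => // H; case: (Hn a.+1); split.
Qed.

Theorem forward (Gamma : form L void -> Prop) :
  consistent_with_Sigmas (C_data ltL ltI mu) Gamma ->
  consistent_with_Sigmas Cstar_data Gamma.
Proof.
move=> [M [cI [HG [Hsk [Hlin [Hii [Hiii [Hiv H1iv]]]]]]]].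
have Hf1 : forall c : cst Cstar_data, True -> fst_ix (hmap c) = h1 (fst_ix c) by [].
have Hlex : forall c d : cst Cstar_data, True -> True ->
   (lexlt (hmap c) (hmap d) <-> lexlt c d) by move=> c d _ _; exact: hmap_lex.
have Hlt : forall c d : cst Cstar_data, True -> True ->
   lt1 (fst_ix c) (fst_ix d) -> lt1 (i := C_data ltL ltI mu) (h1 (fst_ix c)) (h1 (fst_ix d)).
  by move=> c d _ _; apply: h1_lt.
have Hinj : forall c d : cst Cstar_data, True -> True ->
   h1 (fst_ix c) = h1 (fst_ix d) -> fst_ix c = fst_ix d.
  by move=> c d _ _; apply: h1_refl.2.
have Hpred : forall c d : cst Cstar_data, True -> True ->
   pred_ix (fst_ix c) (fst_ix d) ->
   pred_ix (X := C_data ltL ltI mu) (h1 (fst_ix c)) (h1 (fst_ix d)).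
  by move=> c d _ _ /nat_pred ->; exact: succI_spec.
have Hbot : forall c : cst Cstar_data, True ->
   (exists a, lt1 a (fst_ix c)) -> exists a, lt1 (i := C_data ltL ltI mu) a (h1 (fst_ix c)).
  move=> c _ [a /= Ha]; exists (h1 0); apply: h1_lt.
  by case: (fst_ix c) Ha.
exists M, (fun c => cI (hmap c)); do 3 (split => //); split; [|split; [|split]].
- by move=> c d; exact (tr_ii Hii Hlex c d Logic.I Logic.I).
- move=> tau cs c Ha Hl.
  exact (tr_iii Hiii Hlex Hf1 Hlt tau cs c Logic.I (fun _ _ => Logic.I) Ha Hl).
- move=> tau pre post post' p d Ha Hle Hdp Hm Hi Hl.
  exact (tr_iv Hiv Hlex Hf1 Hlt tau pre post post' p d (fun _ _ => Logic.I) Ha Hle Hdp Hm Hi Hl).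
- move=> tau pre post post' p d u Ha Hpo Hpr Hpd Hex Hle Hsz Hu Hi Hl.
  exact (tr1_iv H1iv Hlex Hf1 Hlt Hinj Hpred Hbot tau pre post post' p d u (fun _ _ => Logic.I) Ha Hpo Hpr Hpd Hex Hle Hsz Hu Hi Hl).
Qed.

End Forward.

Definition dec (P : Prop) : bool := if boolp.pselect P then true else false.
Lemma decE P : dec P = true <-> P.
Proof. by rewrite /dec; case: boolp.pselect. Qed.
Lemma decT {P : Prop} : P -> dec P = true.
Proof. by move=> p; apply/decE. Qed.
Lemma decF {P : Prop} : ~ P -> dec P = false.
Proof. by rewrite /dec; case: boolp.pselect. Qed.

Fixpoint dd {A : Type} (l : seq A) : seq A :=
  if l is x :: l' then (if dec (List.In x l') then dd l' else x :: dd l') else [::].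

Lemma dd_In {A : Type} (l : seq A) x : List.In x (dd l) <-> List.In x l.
Proof.
elim: l => [|y l IH] //=; rewrite /dec; case: boolp.pselect => H /=.
  rewrite IH; split; [by right|by case=> // <-].
by rewrite IH.
Qed.

Lemma dd_nodup {A : Type} (l : seq A) : List.NoDup (dd l).
Proof.
elim: l => [|y l IH] /=; first by constructor.
rewrite /dec; case: boolp.pselect => H //=; constructor => //.
by rewrite dd_In.
Qed.

Section Counts.
Variable A : Type.
Lemma count_le (P Q : A -> Prop) l : (forall x, P x -> Q x) ->
  (count (fun x => dec (P x)) l <= count (fun x => dec (Q x)) l)%N.
Proof.
move=> PQ; elim: l => [|x l IH] //=.
case: (boolp.pselect (P x)) => Px.
  by rewrite (decT Px) (decT (PQ x Px)) leq_add2l.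
by rewrite (decF Px) add0n; apply: leq_trans IH _; apply: leq_addl.
Qed.

Lemma count_lt (P Q : A -> Prop) l a : (forall x, P x -> Q x) -> Q a -> ~ P a ->
  List.In a l -> (count (fun x => dec (P x)) l < count (fun x => dec (Q x)) l)%N.
Proof.
move=> PQ Qa nPa; elim: l => [|x l IH] //= [E|H].
  subst x; rewrite (decF nPa) (decT Qa) add0n add1n ltnS; exact: count_le.
case: (boolp.pselect (P x)) => Px.
  by rewrite (decT Px) (decT (PQ x Px)) ltn_add2l; apply: IH.
rewrite (decF Px) add0n; apply: leq_trans (IH H) _; apply: leq_addl.
Qed.

Lemma count_eq_in (P Q : A -> Prop) l : (forall x, List.In x l -> (P x <-> Q x)) ->
  count (fun x => dec (P x)) l = count (fun x => dec (Q x)) l.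
Proof.
elim: l => [|x l IH] //= H; rewrite IH; last by move=> y Hy; apply: H; right.
congr (_ + _); case: (boolp.pselect (P x)) => Px.
  by rewrite !decT //; apply/(H x) => //; left.
by rewrite !decF // => Qx; apply: Px; apply/(H x) => //; left.
Qed.

Lemma count_succ (P Q : A -> Prop) l a : List.NoDup l -> List.In a l ->
  (forall x, Q x <-> P x \/ x = a) -> ~ P a ->
  count (fun x => dec (Q x)) l = (count (fun x => dec (P x)) l).+1.
Proof.
move=> nd; elim: nd => [|x l' nx nd IH] //= [E|Hin] HQ nPa.
  subst x; rewrite (decF nPa) (decT (P := Q a)); last by apply/HQ; right.
  rewrite add0n add1n; congr S; apply: count_eq_in => y Hy; rewrite HQ.
  by split => [[//|E]|]; [subst y|left].
rewrite (IH Hin HQ nPa) -addnS; congr (_ + _).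
case: (boolp.pselect (P x)) => Px.
  by rewrite !decT //; apply/HQ; left.
rewrite !decF // => /HQ [//|E]; subst x; exact: nx Hin.
Qed.
End Counts.

Section Backward.
Variables (L : lang) (Lam : Type) (ltL : Lam -> Lam -> Prop)
  (I : Type) (ltI : I -> I -> Prop) (mu : I -> Lam).
Hypothesis Hs : singular_setup ltL ltI mu.

Let Cd := C_data ltL ltI mu.
Let Lso : strict_wellorder ltL. Proof. by case: Hs. Qed.
Let Iso : strict_wellorder ltI. Proof. by case: Hs. Qed.

Definition e1 (s : seq (cst Cd)) (a : I) : nat :=
  (count (fun x => dec (ltI x a)) (dd (map fst_ix s))).+1.
Definition e2 (s : seq (cst Cd)) (c : cst Cd) : nat :=
  count (fun d : cst Cd => dec (ltL (snd_ix d) (snd_ix c))) s.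
Definition emb (s : seq (cst Cd)) (c : cst Cd) : cst Cstar_data :=
  exist (fun p : nat * nat => True) (e1 s (fst_ix c), e2 s c) Logic.I.

Section S.
Variable s : seq (cst Cd).
Let D := fun c => List.In c s.

Lemma e1_lt {c d : cst Cd} : D c -> ltI (fst_ix c) (fst_ix d) ->
  (e1 s (fst_ix c) < e1 s (fst_ix d))%N.
Proof.
have [Iirr [Itr _]] := Iso.
move=> Dc H; rewrite /e1 ltnS; apply: count_lt.
- by move=> x Hx; apply: Itr Hx H.
- exact: H.
- exact: Iirr.
- by apply/dd_In; apply: In_map_in.
Qed.

Lemma e1_inj (c d : cst Cd) : D c -> D d -> e1 s (fst_ix c) = e1 s (fst_ix d) -> fst_ix c = fst_ix d.
Proof.
have [_ [_ [Itot _]]] := Iso.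
move=> Dc Dd E; case: (Itot (fst_ix c) (fst_ix d)) => [//|[H|H]].
  by have := e1_lt Dc H; rewrite E ltnn.
by have := e1_lt Dd H; rewrite E ltnn.
Qed.

Lemma e1_refl (c d : cst Cd) : D c -> D d -> (e1 s (fst_ix c) < e1 s (fst_ix d))%N ->
  ltI (fst_ix c) (fst_ix d).
Proof.
have [_ [_ [Itot _]]] := Iso.
move=> Dc Dd E; case: (Itot (fst_ix c) (fst_ix d)) => [Q|[//|H]].
  by move: E; rewrite Q ltnn.
by have := e1_lt Dd H; rewrite ltnNge ltnW.
Qed.

Lemma e2_lt {c d : cst Cd} : D c -> ltL (snd_ix c) (snd_ix d) -> (e2 s c < e2 s d)%N.
Proof.
have [Lirr [Ltr _]] := Lso.
move=> Dc H; rewrite /e2; apply: count_lt (Dc).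
- by move=> x Hx; apply: Ltr Hx H.
- exact: H.
- exact: Lirr.
Qed.

Lemma e1_pred {c d : cst Cd} : D c -> pred_ix (fst_ix c) (fst_ix d) ->
  e1 s (fst_ix d) = (e1 s (fst_ix c)).+1.
Proof.
have [Iirr [Itr [Itot _]]] := Iso.
move=> Dc [Hcd Hn]; rewrite /e1; congr S; apply: (@count_succ _ _ _ _ (fst_ix c)).
- exact: dd_nodup.
- by apply/dd_In; apply: In_map_in.
- move=> x; split.
    move=> Hx; case: (Itot x (fst_ix c)) => [E|[H|H]]; [by right|by left|].
    by case: (Hn x).
  by case=> [H|->] //; apply: Itr H Hcd.
- exact: Iirr.
Qed.

Lemma emb_lex (c d : cst Cd) : D c -> D d -> (lexlt (emb s c) (emb s d) <-> lexlt c d).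
Proof.
have [_ [_ [Ltot _]]] := Lso.
move=> Dc Dd; rewrite /lexlt /=; split.
  case=> [H|[E H]]; first by left; apply: e1_refl.
  right; split; first by apply: e1_inj.
  case: (Ltot (snd_ix c) (snd_ix d)) => [Q|[//|Q]].
    have H' : (e2 s c < e2 s d)%N := H.
    by move: H'; rewrite /e2 Q ltnn.
  have H' : (e2 s c < e2 s d)%N := H.
  by have := e2_lt Dd Q; rewrite ltnNge ltnW.
case=> [H|[E H]]; first by left; apply: e1_lt.
by right; split; [exact: (congr1 (e1 s) E)| apply: e2_lt].
Qed.

End S.
Theorem backward (Gamma : form L void -> Prop) :
  consistent_with_Sigmas Cstar_data Gamma -> consistent_with_Sigmas Cd Gamma.
Proof.
move=> [M [cI [HG [Hsk [Hlin [Hii [Hiii [Hiv H1iv]]]]]]]].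
pose cone (F0 : seq (cst Cd)) (s : seq (cst Cd)) :=
  forall c, List.In c F0 -> List.In c s.
pose F (A : seq (cst Cd) -> Prop) := exists F0, forall s, cone F0 s -> A s.
have [U [HU HFU]] : exists U, isUltra U /\ forall A, F A -> U A.
  apply: ultra_exists.
  - by exists [::] => s _.
  - move=> A B [F0 H0] [F1 H1]; exists (F0 ++ F1) => s Hsc; split.
      by apply: H0 => c Hc; apply: Hsc; apply/In_cat; left.
    by apply: H1 => c Hc; apply: Hsc; apply/In_cat; right.
  - by move=> A B AB [F0 H0]; exists F0 => s Hsc; apply: AB; apply: H0.
  - by move=> [F0 H0]; apply: (H0 F0).
have Ucone : forall F0, U (cone F0) by move=> F0; apply: HFU; exists F0.
have Hlex_s : forall s c d, List.In c s -> List.In d s ->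
    (lexlt (emb s c) (emb s d) <-> lexlt c d).
  by move=> s c d Dc Dd; apply: emb_lex.
have Hf1_s : forall s (c : cst Cd), List.In c s -> fst_ix (emb s c) = e1 s (fst_ix c).
  by [].
have Hlt_s : forall s (c d : cst Cd), List.In c s -> List.In d s ->
    lt1 (fst_ix c) (fst_ix d) -> lt1 (i := Cstar_data) (e1 s (fst_ix c)) (e1 s (fst_ix d)).
  by move=> s c d Dc _; apply: e1_lt.
have Hinj_s : forall s (c d : cst Cd), List.In c s -> List.In d s ->
    e1 s (fst_ix c) = e1 s (fst_ix d) -> fst_ix c = fst_ix d.
  by move=> s c d; apply: e1_inj.
have Hpred_s : forall s (c d : cst Cd), List.In c s -> List.In d s ->
    pred_ix (fst_ix c) (fst_ix d) ->
    pred_ix (X := Cstar_data) (e1 s (fst_ix c)) (e1 s (fst_ix d)).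
  move=> s c d Dc _ Hp; rewrite (e1_pred s Dc Hp); split => /=; first exact: ltnSn.
  move=> k [H1 H2]; move: H2; rewrite ltnS => H2.
  by have := leq_trans H1 H2; rewrite ltnn.
have Hbot_s : forall s (c : cst Cd), List.In c s ->
    (exists a, lt1 a (fst_ix c)) -> exists a, lt1 (i := Cstar_data) a (e1 s (fst_ix c)).
  by move=> s c _ _; exists 0%N.
exists (ustruct M U), (fun c => @cls _ M _ U (fun s => cI (emb s c))).
split; first by move=> phi Hp; apply: (ustruct_models HU); apply: HG.
split; first exact: ustruct_skolem.
split; first exact: ustruct_linear.
split; [|split; [|split]].
- move=> c d; rewrite (ltU_cls HU); split.
    move=> H; have [s [Hss Hc]] := U_ex HU _ (uI HU _ _ H (Ucone [:: c; d])).
    have Dc : List.In c s by apply: Hc; left.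
    have Dd : List.In d s by apply: Hc; right; left.
    exact: (tr_ii Hii (Hlex_s s) c d Dc Dd).1 Hss.
  move=> H; refine (US HU (Ucone [:: c; d]) _) => s Hc.
  have Dc : List.In c s by apply: Hc; left.
  have Dd : List.In d s by apply: Hc; right; left.
  exact: (tr_ii Hii (Hlex_s s) c d Dc Dd).2 H.
- move=> tau cs c Ha Hl; rewrite (tval_u HU) (ltU_cls HU).
  refine (US HU (Ucone (c :: cs)) _) => s Hc.
  exact (tr_iii Hiii (Hlex_s s) (Hf1_s s) (Hlt_s s) tau cs c
           (Hc c (or_introl erefl)) (fun x Hx => Hc x (or_intror Hx)) Ha Hl).
- move=> tau pre post post' p d Ha Hle Hdp Hm Hi Hl.
  move: Hl; rewrite !(tval_u HU) (ltU_cls HU) => Hl; apply/(cls_eq HU).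
  refine (UI2 HU Hl (Ucone (d :: pre ++ p :: post ++ post')) _) => s Hl' Hc.
  exact (tr_iv Hiv (Hlex_s s) (Hf1_s s) (Hlt_s s) tau pre post post' p d Hc
           Ha Hle Hdp Hm Hi Hl').
- move=> tau pre post post' p d u Ha Hpo Hpr Hpd Hex Hle Hsz Hu Hi Hl.
  move: Hl; rewrite !(tval_u HU) (ltU_cls HU) => Hl; apply/(cls_eq HU).
  refine (UI2 HU Hl (Ucone (d :: pre ++ p :: post ++ post')) _) => s Hl' Hc.
  exact (tr1_iv H1iv (Hlex_s s) (Hf1_s s) (Hlt_s s) (Hinj_s s) (Hpred_s s) (Hbot_s s)
           tau pre post post' p d u Hc Ha Hpo Hpr Hpd Hex Hle Hsz Hu Hi Hl').
Qed.

End Backward.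

Theorem lemma4p2 (L : lang) (Lam : Type) (ltL : Lam -> Lam -> Prop)
    (I : Type) (ltI : I -> I -> Prop) (mu : I -> Lam)
    (Gamma : form L void -> Prop) :
  singular_setup ltL ltI mu ->
  (forall phi, Gamma phi -> LS_sentence phi) ->
  (consistent_with_Sigmas (C_data ltL ltI mu) Gamma <->
   consistent_with_Sigmas Cstar_data Gamma).
Proof.
move=> Hs _; split; [exact: forward | exact: backward].
Qed.
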